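(* Let $(T_n)$ be a sequence of tournaments with $|T_n|\to\infty$ such that $c_3=\lim\mathbf{pr}(C_3,T_n)$ and $c_4=\lim\mathbf{pr}(C_4,T_n)$ exist. If $c_3\ge\frac1{16}$ then $c_4\ge\frac3{64}$. In particular, the balanced random blow-up of the transitive tournament $T_2$ (which has $c_3=\frac1{16}$ and $c_4=\frac3{64}$) minimizes $c_4$ among all such sequences with $c_3=\frac1{16}$.
   Context: For tournaments $T,H$, $\mathbf{pr}(H,T)$ denotes the probability that a uniformly random set of $|H|$ vertices of $T$ spans a subtournament isomorphic to $H$. $C_3$ is the cyclically oriented triangle, $C_4$ is the $4$-vertex tournament containing a directed Hamiltonian $4$-cycle, and $T_m$ is the transitive $m$-vertex tournament. The balanced random blow-up of a $k$-vertex tournament $H$ is the sequence whose $n$-th member has vertex set $V_1\sqcup\dots\sqcup V_k$ with $|V_i|=\lfloor n/k\rfloor$, all edges directed from $V_i$ to $V_j$ whenever $i\to j$ in $H$, and a uniformly random tournament on each $V_i$ (limits taken almost surely). *)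

(* Defs.v *)
From mathcomp Require Import all_boot.
From Stdlib Require Import Reals.

Set Implicit Arguments.
Unset Strict Implicit.
Unset Printing Implicit Defensive.

(* A tournament on the vertex set 'I_m (every finite tournament is isomorphic
   to one of this form): irreflexive, and for distinct vertices exactly one
   of the two arcs is present. *)
Definition is_tournament (m : nat) (t : rel 'I_m) : Prop :=
  (forall i : 'I_m, ~~ t i i) /\
  (forall i j : 'I_m, i != j -> t i j = ~~ t j i).

Definition spans_copy (k m : nat) (h : rel 'I_k) (t : rel 'I_m)
  (S : {set 'I_m}) : bool :=
  [exists f : {ffun 'I_k -> 'I_m},
     [&& injectiveb f, S == [set f x | x : 'I_k] &
         [forall i : 'I_k, [forall j : 'I_k, h i j == t (f i) (f j)]]]].

Definition ncopies (k m : nat) (h : rel 'I_k) (t : rel 'I_m) : nat :=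
  #|[set S : {set 'I_m} | (#|S| == k) && spans_copy h t S]|.

Definition pr (k m : nat) (h : rel 'I_k) (t : rel 'I_m) : R :=
  (INR (ncopies h t) / INR 'C(m, k))%R.

Definition C3 : rel 'I_3 :=
  fun i j => ((nat_of_ord i, nat_of_ord j) \in [:: (0, 1); (1, 2); (2, 0)]).

(* C_4: the 4-vertex tournament with directed Hamiltonian cycle
   0 -> 1 -> 2 -> 3 -> 0 and diagonals 0 -> 2, 1 -> 3
   (the unique strongly connected 4-vertex tournament up to isomorphism) *)
Definition C4 : rel 'I_4 :=
  fun i j => ((nat_of_ord i, nat_of_ord j) \in
                [:: (0, 1); (1, 2); (2, 3); (3, 0); (0, 2); (1, 3)]).

(* Main.v *)
Require Import Defs.
From mathcomp Require Import all_boot.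
From Stdlib Require Import Reals Lra Psatz.
From mathcomp Require ssralg ssrnum ssrint.
From mathcomp Require ring zify.
Set Implicit Arguments.
Unset Strict Implicit.

Definition cyc3 m (t : rel 'I_m) (x : 'I_m * 'I_m * 'I_m) : bool :=
  [&& t x.1.1 x.1.2, t x.1.2 x.2 & t x.2 x.1.1].
Definition dc m (t : rel 'I_m) (x : 'I_m * 'I_m * 'I_m * 'I_m) : bool :=
  [&& x.2 != x.1.2, t x.1.1.1 x.1.1.2, t x.1.1.2 x.1.2, t x.1.2 x.1.1.1,
      t x.1.1.2 x.2 & t x.2 x.1.1.1].
Arguments cyc3 {m} t x.
Arguments dc {m} t x.

Lemma sum_b (T : finType) (P : pred T) : \sum_x (P x : nat) = #|[set x | P x]|.
Proof.
rewrite cardsE -sum1_card [RHS]big_mkcond; apply: eq_bigr => x _.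
by rewrite unfold_in; case: (P x).
Qed.

Lemma fiber_partition (X Y : finType) (P : pred X) (f : X -> Y) :
  \sum_(y : Y) #|[set x | P x && (f x == y)]| = #|[set x | P x]|.
Proof.
rewrite -sum_b; under eq_bigr do rewrite -sum_b.
rewrite exchange_big; apply: eq_bigr => x _.
rewrite (bigD1 (f x)) //= eqxx andbT big1 ?addn0 // => y.
by rewrite eq_sym => /negbTE ->; rewrite andbF.
Qed.

Lemma spans_card k m (h : rel 'I_k) (t : rel 'I_m) S :
  spans_copy h t S -> #|S| = k.
Proof.
case/existsP=> f /and3P [/injectiveP inj /eqP -> _].
by rewrite card_imset // card_ord.
Qed.

Lemma asym m (t : rel 'I_m) (Ht : is_tournament t) a b : t a b -> t b a -> False.
Proof.
case: (eqVneq a b) => [->|nab]; first by rewrite (negbTE (Ht.1 b)).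
by rewrite (Ht.2 _ _ nab) => /negbTE ->.
Qed.

Lemma asymF m (t : rel 'I_m) (Ht : is_tournament t) a b : t a b -> t b a = false.
Proof. by move=> H; apply/negP => H'; exact: (asym Ht H H'). Qed.

Lemma totl m (t : rel 'I_m) (Ht : is_tournament t) a b : a != b -> t a b = false -> t b a.
Proof. by move=> nab; rewrite (Ht.2 _ _ nab) => /negbFE. Qed.

Ltac tcontra :=
  match goal with
  | Ht : is_tournament ?t, H : is_true (?t ?a ?a) |- _ =>
      exfalso; move: H; rewrite (negbTE (Ht.1 a)) //
  | Ht : is_tournament ?t, H1 : is_true (?t ?a ?b), H2 : is_true (?t ?b ?a) |- _ =>
      exfalso; exact: (asym Ht H1 H2)
  end.

Definition o3 i (H : (i < 3)%nat) : 'I_3 := Ordinal H.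
Definition o4 i (H : (i < 4)%nat) : 'I_4 := Ordinal H.

Lemma pat4 m (t : rel 'I_m) (Ht : is_tournament t) a b c d :
  t a b -> t b c -> t c d -> t d a -> t a c -> t b d ->
  (#|[set a; b; c; d]| == 4) && spans_copy C4 t [set a; b; c; d].
Proof.
move=> tab tbc tcd tda tac tbd.
have tba := asymF Ht tab. have tcb := asymF Ht tbc. have tdc := asymF Ht tcd.
have tad := asymF Ht tda. have tca := asymF Ht tac. have tdb := asymF Ht tbd.
have ia := negbTE (Ht.1 a). have ib := negbTE (Ht.1 b).
have ic := negbTE (Ht.1 c). have id := negbTE (Ht.1 d).
suff H : spans_copy C4 t [set a; b; c; d] by rewrite H (spans_card H) eqxx.
apply/existsP; exists [ffun i : 'I_4 => nth a [:: a; b; c; d] i].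
apply/and3P; split.
- apply/injectiveP => i j; rewrite !ffunE.
  case: i => [[|[|[|[|i]]]] Hi] //; case: j => [[|[|[|[|j]]]] Hj] //;
    rewrite /= => E; first [by apply: val_inj | subst; tcontra].
- apply/eqP; apply/setP => y; rewrite !inE; apply/idP/imsetP.
  + move=> /orP [/orP [/orP [] | ] | ] /eqP ->.
    * by exists (o4 (isT : (0 < 4)%nat)); rewrite // ffunE.
    * by exists (o4 (isT : (1 < 4)%nat)); rewrite // ffunE.
    * by exists (o4 (isT : (2 < 4)%nat)); rewrite // ffunE.
    * by exists (o4 (isT : (3 < 4)%nat)); rewrite // ffunE.
  + case=> i _ ->; rewrite ffunE.
    by case: i => [[|[|[|[|i]]]] Hi] //=; rewrite eqxx ?orbT.
- apply/forallP => i; apply/forallP => j; rewrite !ffunE.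
  case: i => [[|[|[|[|i]]]] Hi] //; case: j => [[|[|[|[|j]]]] Hj] //=;
  by rewrite /C4 /= ?tab ?tbc ?tcd ?tda ?tac ?tbd ?tba ?tcb ?tdc ?tad ?tca ?tdb ?ia ?ib ?ic ?id.
Qed.

Definition img3 m (x : 'I_m * 'I_m * 'I_m) : {set 'I_m} := [set x.1.1; x.1.2; x.2].
Definition img4 m (x : 'I_m * 'I_m * 'I_m * 'I_m) : {set 'I_m} :=
  [set x.1.1.1; x.1.1.2; x.1.2; x.2].

Lemma ne_of m (t : rel 'I_m) (Ht : is_tournament t) a b : t a b -> (a == b) = false.
Proof. by move=> H; apply/eqP => E; move: H; rewrite E (negbTE (Ht.1 b)). Qed.

Lemma fib3 m (t : rel 'I_m) (Ht : is_tournament t) S :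
  spans_copy C3 t S -> 3 <= #|[set x | cyc3 t x && (img3 x == S)]|.
Proof.
case/existsP => f /and3P [/injectiveP inj /eqP HS /forallP hom].
set o0 := o3 (isT : (0 < 3)%nat). set o1 := o3 (isT : (1 < 3)%nat).
set o2 := o3 (isT : (2 < 3)%nat).
have arc : forall i j : 'I_3, C3 i j = t (f i) (f j).
  by move=> i j; move/forallP: (hom i) => /(_ j) /eqP.
have tab : t (f o0) (f o1) by rewrite -arc.
have tbc : t (f o1) (f o2) by rewrite -arc.
have tca : t (f o2) (f o0) by rewrite -arc.
have Sabc : S = [set f o0; f o1; f o2].
  rewrite HS; apply/setP => y; rewrite !inE; apply/imsetP/idP.
  - case=> i _ ->; case: i => [[|[|[|i]]] Hi] //.
    + have -> : Ordinal Hi = o0 by apply: val_inj.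
      by rewrite eqxx.
    + have -> : Ordinal Hi = o1 by apply: val_inj.
      by rewrite eqxx orbT.
    + have -> : Ordinal Hi = o2 by apply: val_inj.
      by rewrite eqxx orbT.
  - by move=> /orP [/orP [] | ] /eqP ->; eexists.
set a := f o0 in tab tca Sabc *. set b := f o1 in tab tbc Sabc *.
set c := f o2 in tbc tca Sabc *.
have nab := ne_of Ht tab. have nbc := ne_of Ht tbc. have nca := ne_of Ht tca.
have nba : (b == a) = false by rewrite eq_sym.
have ncb : (c == b) = false by rewrite eq_sym.
have nac : (a == c) = false by rewrite eq_sym.
have -> : 3 = size [:: (a, b, c); (b, c, a); (c, a, b)] by [].
have U : uniq [:: (a, b, c); (b, c, a); (c, a, b)].
  by rewrite /= !inE !xpair_eqE nab nbc nca nac nba ncb.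
rewrite -(card_uniqP U); apply: subset_leq_card; apply/subsetP => x.
rewrite !inE /cyc3 /img3 => /or3P [] /eqP -> /=; rewrite tab tbc tca /= Sabc;
  apply/eqP/setP => y; rewrite !inE; by case: (y == a); case: (y == b); case: (y == c).
Qed.

Lemma F3 m (t : rel 'I_m) (Ht : is_tournament t) :
  3 * ncopies C3 t <= #|[set x | cyc3 t x]|.
Proof.
rewrite -(fiber_partition (cyc3 t) (@img3 m)) /ncopies mulnC -sum_nat_const.
apply: (@leq_trans (\sum_(S in [set S : {set 'I_m} | (#|S| == 3) && spans_copy C3 t S])
   #|[set x | cyc3 t x && (img3 x == S)]|)).
  by apply: leq_sum => S; rewrite inE => /andP [_ HS]; exact: fib3.
by rewrite [X in _ <= X](bigID (fun S => S \in [set S : {set 'I_m} | (#|S| == 3) && spans_copy C3 t S])) /= leq_addr.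
Qed.

Lemma dc_inj m (t : rel 'I_m) (Ht : is_tournament t) x y :
  dc t x -> dc t y -> img4 y = img4 x -> t x.1.2 x.2 = t y.1.2 y.2 -> y = x.
Proof.
case: x => [[[u v] w] z]; case: y => [[[u' v'] w'] z'].
rewrite /dc /img4 /= => /andP [nzw /and5P [tuv tvw twu tvz tzu]]
  /andP [nzw' /and5P [tuv' tvw' twu' tvz' tzu']] E.
have mu : u' \in [set u; v; w; z] by rewrite -E !inE eqxx.
have mv : v' \in [set u; v; w; z] by rewrite -E !inE eqxx ?orbT.
have mw : w' \in [set u; v; w; z] by rewrite -E !inE eqxx ?orbT.
have mz : z' \in [set u; v; w; z] by rewrite -E !inE eqxx ?orbT.
case Ewz : (t w z) => Hk.
- have twz' : t w' z' by rewrite -Hk.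
  have twz : t w z by rewrite Ewz.
  clear Ewz Hk.
  move: mu mv mw mz; rewrite !inE;
  do 4 (move=> /orP [/orP [/orP [] | ] | ] /eqP ?; subst); first [by [] | tcontra].
- have tzw : t z w by apply: (totl Ht _ Ewz); rewrite eq_sym.
  have tzw' : t z' w' by apply: (totl Ht _ (esym Hk)); rewrite eq_sym.
  clear Ewz Hk.
  move: mu mv mw mz; rewrite !inE;
  do 4 (move=> /orP [/orP [/orP [] | ] | ] /eqP ?; subst); first [by [] | tcontra].
Qed.

Lemma fib4 m (t : rel 'I_m) (Ht : is_tournament t) S :
  #|[set x | dc t x && (img4 x == S)]| <= 2 * ((#|S| == 4) && spans_copy C4 t S).
Proof.
case: (pickP (fun x => dc t x && (img4 x == S))) => [x0 /andP [d0 /eqP e0] | none]; last first.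
  by rewrite -sum_b big1 // => x _; rewrite none.
have -> : (#|S| == 4) && spans_copy C4 t S.
  rewrite -e0; clear e0; move: d0; case: x0 => [[[u v] w] z].
  rewrite /dc /img4 /= => /andP [nzw /and5P [tuv tvw twu tvz tzu]].
  case Ewz : (t w z).
  - have -> : [set u; v; w; z] = [set v; w; z; u].
      by apply/setP => y; rewrite !inE; case: (y == u); case: (y == v); case: (y == w); case: (y == z).
    exact: pat4.
  - have tzw : t z w by apply: (totl Ht _ Ewz); rewrite eq_sym.
    have -> : [set u; v; w; z] = [set v; z; w; u].
      by apply/setP => y; rewrite !inE; case: (y == u); case: (y == v); case: (y == w); case: (y == z).
    exact: pat4.
rewrite muln1.
rewrite -(@card_in_imset _ _ (fun x => t x.1.2 x.2)).
  by apply: leq_trans (max_card _) _; rewrite card_bool.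
move=> x y; rewrite !inE => /andP [dx /eqP ex] /andP [dy /eqP ey] key.
by apply: esym; apply: (dc_inj Ht dx dy); rewrite ?ex ?ey.
Qed.

Lemma F4 m (t : rel 'I_m) (Ht : is_tournament t) :
  #|[set x | dc t x]| <= 2 * ncopies C4 t.
Proof.
rewrite -(fiber_partition (dc t) (@img4 m)) /ncopies -sum_b big_distrr /=.
by apply: leq_sum => S _; exact: fib4.
Qed.

Module Alg.
Import ssralg ssrnum ssrint GRing.Theory Num.Theory ring zify.
Set Implicit Arguments.
Unset Strict Implicit.
Local Open Scope ring_scope.

Definition ei (b : bool) : int := (b : nat)%:R.
Definition e {m} (t : rel 'I_m) x y := ei (t x y).
Definition deg {m} (t : rel 'I_m) u : int := \sum_v e t u v.

Lemma ei_sq b : ei b * ei b = ei b.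
Proof. by case: b; rewrite /ei /= ?mulr1 ?mulr0. Qed.

Lemma sum_eq1 m (F : 'I_m -> int) v : \sum_u F u * ei (u == v) = F v.
Proof.
rewrite (bigD1 v) //= eqxx /ei /= mulr1 big1 ?addr0 // => u /negbTE ->.
by rewrite mulr0.
Qed.

Lemma sum_ne m (v : 'I_m) : \sum_u ei (u != v) = m%:R - 1.
Proof.
have E : forall u, ei (u != v) = 1 - ei (u == v).
  by move=> u; case: (u == v); rewrite /ei /= ?subr0 ?subrr.
under eq_bigr do rewrite E.
rewrite sumrB; have H : \sum_u ei (u == v) = 1.
  by rewrite (bigD1 v) //= eqxx big1 ?addr0 // => u /negbTE ->.
by rewrite H sumr_const card_ord.
Qed.

Section S.
End S.

Lemma e_irr m (t : rel 'I_m) (Ht : is_tournament t) x : e t x x = 0.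
Proof. by rewrite /e (negbTE (Ht.1 x)). Qed.

Lemma e_sym m (t : rel 'I_m) (Ht : is_tournament t) x y :
  e t x y + e t y x = ei (x != y).
Proof.
case: (eqVneq x y) => [->|nxy]; first by rewrite e_irr // addr0.
by rewrite /e (Ht.2 _ _ nxy); case: (t y x).
Qed.

Lemma e_anti m (t : rel 'I_m) (Ht : is_tournament t) x y :
  e t x y * e t y x = 0.
Proof.
case: (eqVneq x y) => [->|nxy]; first by rewrite e_irr // mul0r.
by rewrite /e (Ht.2 _ _ nxy); case: (t y x); rewrite /ei /= ?mulr0 ?mul0r.
Qed.

Lemma in_deg m (t : rel 'I_m) (Ht : is_tournament t) v :
  \sum_u e t u v = m%:R - 1 - deg t v.
Proof.
have : \sum_(u < m) (e t u v + e t v u) = m%:R - 1.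
  by under eq_bigr do rewrite e_sym //; rewrite sum_ne.
by rewrite big_split /= => <-; rewrite addrK.
Qed.


Lemma sum_in m (t : rel 'I_m) (Ht : is_tournament t) (F : 'I_m -> int) :
  \sum_u \sum_v e t u v * F v = \sum_v (m%:R - 1 - deg t v) * F v.
Proof. by rewrite exchange_big; apply: eq_bigr => v _; rewrite -mulr_suml in_deg. Qed.

Lemma sum_out m (t : rel 'I_m) (F : 'I_m -> int) :
  \sum_u \sum_v e t u v * F u = \sum_u deg t u * F u.
Proof. by apply: eq_bigr => u _; rewrite /deg mulr_suml. Qed.

Lemma S1_eq m (t : rel 'I_m) (Ht : is_tournament t) :
  \sum_u deg t u + \sum_u deg t u = m%:R * (m%:R - 1).
Proof.
have H : \sum_(u < m) deg t u = \sum_(v < m) (m%:R - 1 - deg t v).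
  by rewrite /deg exchange_big; apply: eq_bigr => v _; rewrite in_deg.
rewrite sumrB sumr_const card_ord in H.
rewrite {1}H.
by rewrite subrK -[LHS]mulr_natr mulrC.
Qed.

Lemma sum_sym m (t : rel 'I_m) (Ht : is_tournament t) (X : 'I_m -> 'I_m -> int) :
  (forall u v, X u v = X v u) -> (forall u, X u u = 0) ->
  \sum_u \sum_v e t u v * X u v + \sum_u \sum_v e t u v * X u v = \sum_u \sum_v X u v.
Proof.
move=> Xs X0.
rewrite {2}exchange_big /=.
rewrite -big_split /=; apply: eq_bigr => u _.
rewrite -big_split /=; apply: eq_bigr => v _.
rewrite (Xs v u) -mulrDl e_sym //.
by case: (eqVneq u v) => [->|_]; rewrite ?X0 /ei /= ?mulr0 ?mul1r.
Qed.


Lemma sum3B m (F G : 'I_m -> 'I_m -> 'I_m -> int) :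
  \sum_u \sum_v \sum_w (F u v w - G u v w) =
  \sum_u \sum_v \sum_w F u v w - \sum_u \sum_v \sum_w G u v w.
Proof.
rewrite -sumrB; apply: eq_bigr => u _; rewrite -sumrB; apply: eq_bigr => v _.
by rewrite -sumrB.
Qed.

Lemma sum3D m (F G : 'I_m -> 'I_m -> 'I_m -> int) :
  \sum_u \sum_v \sum_w (F u v w + G u v w) =
  \sum_u \sum_v \sum_w F u v w + \sum_u \sum_v \sum_w G u v w.
Proof.
rewrite -big_split; apply: eq_bigr => u _; rewrite -big_split; apply: eq_bigr => v _.
by rewrite -big_split.
Qed.

Definition K3 m (t : rel 'I_m) := \sum_u \sum_v \sum_w e t u v * e t v w * e t w u.
Definition Tr m (t : rel 'I_m) := \sum_u \sum_v \sum_w e t u v * e t v w * e t u w.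
Definition S1 m (t : rel 'I_m) := \sum_u deg t u.
Definition S2 m (t : rel 'I_m) := \sum_u deg t u * deg t u.

Lemma ei_neq m (x y : 'I_m) : ei (x != y) = 1 - ei (x == y).
Proof. by case: (x == y); rewrite /ei /= ?subr0 ?subrr. Qed.

Lemma K3_split m (t : rel 'I_m) (Ht : is_tournament t) :
  K3 t = (m%:R - 1) * S1 t - S2 t - Tr t.
Proof.
have E : forall u v w, e t u v * e t v w * e t w u =
   e t u v * e t v w - e t u v * e t v w * ei (w == u) - e t u v * e t v w * e t u w.
  move=> u v w; have := e_sym Ht w u; rewrite ei_neq => H.
  rewrite -[e t w u](addrK (e t u w)) H.
  by rewrite mulrBr mulrBr mulr1.
rewrite /K3; under eq_bigr do under eq_bigr do under eq_bigr do rewrite E.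
rewrite sum3B sum3B -/(Tr t).
congr (_ - _).
have -> : \sum_(u < m) \sum_(v < m) \sum_(w < m) e t u v * e t v w * ei (w == u) = 0.
  apply: big1 => u _; apply: big1 => v _; rewrite sum_eq1.
  by rewrite e_anti.
rewrite subr0.
have -> : \sum_(u < m) \sum_(v < m) \sum_(w < m) e t u v * e t v w = \sum_(u < m) \sum_(v < m) e t u v * deg t v.
  by apply: eq_bigr => u _; apply: eq_bigr => v _; rewrite /deg mulr_sumr.
rewrite sum_in //.
under eq_bigr do rewrite mulrBl.
by rewrite sumrB -mulr_sumr.
Qed.

Lemma S2_split m (t : rel 'I_m) (Ht : is_tournament t) :
  S2 t = Tr t + Tr t + S1 t.
Proof.
have E : forall u v w, e t u v * e t u w =
   e t u v * e t v w * e t u w + e t u v * e t u w * e t w v + e t u v * e t u w * ei (w == v).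
  move=> u v w; have := e_sym Ht v w; rewrite ei_neq eq_sym => H.
  by rewrite mulrAC -!mulrDr H subrK mulr1.
have -> : S2 t = \sum_(u < m) \sum_(v < m) \sum_(w < m) e t u v * e t u w.
  by apply: eq_bigr => u _; rewrite /deg mulr_suml; apply: eq_bigr => v _; rewrite mulr_sumr.
under eq_bigr do under eq_bigr do under eq_bigr do rewrite E.
rewrite sum3D sum3D -/(Tr t).
congr (_ + _ + _).
  rewrite /Tr; apply: eq_bigr => u _; rewrite exchange_big /=.
  apply: eq_bigr => v _; apply: eq_bigr => w _.
  by rewrite -[LHS]mulrA [LHS]mulrC.
apply: eq_bigr => u _; apply: eq_bigr => v _.
by rewrite sum_eq1 ei_sq.
Qed.


Lemma sum2_lin3 m (a b c : int) (F G H : 'I_m -> 'I_m -> int) :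
  \sum_u \sum_v (a * F u v + b * G u v + c * H u v) =
  a * \sum_u \sum_v F u v + b * \sum_u \sum_v G u v + c * \sum_u \sum_v H u v.
Proof.
rewrite !mulr_sumr -!big_split; apply: eq_bigr => u _.
by rewrite !mulr_sumr -!big_split.
Qed.

Lemma sum2_lin4 m (a b c d : int) (F G H K : 'I_m -> 'I_m -> int) :
  \sum_u \sum_v (a * F u v + b * G u v + c * H u v + d * K u v) =
  a * \sum_u \sum_v F u v + b * \sum_u \sum_v G u v + c * \sum_u \sum_v H u v
  + d * \sum_u \sum_v K u v.
Proof.
rewrite !mulr_sumr -!big_split; apply: eq_bigr => u _.
by rewrite !mulr_sumr -!big_split.
Qed.

Lemma sum3_lin3 m (a b c : int) (F G H : 'I_m -> 'I_m -> 'I_m -> int) :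
  \sum_u \sum_v \sum_w (a * F u v w + b * G u v w + c * H u v w) =
  a * \sum_u \sum_v \sum_w F u v w + b * \sum_u \sum_v \sum_w G u v w
  + c * \sum_u \sum_v \sum_w H u v w.
Proof.
rewrite !mulr_sumr -!big_split; apply: eq_bigr => u _.
rewrite !mulr_sumr -!big_split; apply: eq_bigr => v _.
by rewrite !mulr_sumr -!big_split.
Qed.

Lemma rot3 m (F : 'I_m -> 'I_m -> 'I_m -> int) :
  \sum_u \sum_v \sum_w F u v w = \sum_u \sum_v \sum_w F v w u.
Proof.
rewrite [RHS]exchange_big; apply: eq_bigr => v _.
by rewrite exchange_big.
Qed.

Definition PA m (t : rel 'I_m) :=
  \sum_u \sum_v e t u v * (m%:R + (deg t v - deg t u) * 2) ^+ 2.

Lemma PA_eq m (t : rel 'I_m) (Ht : is_tournament t) :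
  PA t * 6 = m%:R * m%:R * (m%:R - 1) * (m%:R - 2) + m%:R * K3 t * 16.
Proof.
have E : forall u v, e t u v * (m%:R + (deg t v - deg t u) * 2) ^+ 2 =
   (m%:R * m%:R) * e t u v + (m%:R * 4) * (e t u v * deg t v)
   + (- (m%:R * 4)) * (e t u v * deg t u) + 4 * (e t u v * (deg t v - deg t u) ^+ 2).
  by move=> u v; ring.
rewrite /PA; under eq_bigr do under eq_bigr do rewrite E.
rewrite sum2_lin4 sum_in // sum_out.
have A0 : \sum_(u < m) \sum_(v < m) e t u v = S1 t by [].
have A3 := sum_sym Ht (X := fun u v => (deg t v - deg t u) ^+ 2)
   (fun u v => ltac:(rewrite /=; ring)) (fun u => ltac:(rewrite /= subrr; ring)).
rewrite /= in A3.
have A3' : \sum_(u < m) \sum_(v < m) (deg t v - deg t u) ^+ 2 = S2 t * m%:R * 2 - S1 t * S1 t * 2.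
  have E2 : forall u v, (deg t v - deg t u) ^+ 2 =
    1 * (deg t v * deg t v) + (-2) * (deg t u * deg t v) + 1 * (deg t u * deg t u).
    by move=> u v; ring.
  under eq_bigr do under eq_bigr do rewrite E2.
  rewrite sum2_lin3.
  have -> : \sum_(u < m) \sum_(v < m) deg t v * deg t v = S2 t * m%:R.
    by rewrite sumr_const card_ord /S2 mulr_natr.
  have -> : \sum_(u < m) \sum_(v < m) deg t u * deg t u = S2 t * m%:R.
    rewrite /S2 mulr_suml; apply: eq_bigr => u _.
    by rewrite sumr_const card_ord mulr_natr.
  have -> : \sum_(u < m) \sum_(v < m) deg t u * deg t v = S1 t * S1 t.
    by rewrite /S1 mulr_suml; apply: eq_bigr => u _; rewrite mulr_sumr.
  ring.
rewrite A3' in A3.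
have -> : \sum_(v < m) (m%:R - 1 - deg t v) * deg t v = (m%:R - 1) * S1 t - S2 t.
  by under eq_bigr do rewrite mulrBl; rewrite sumrB -mulr_sumr.
rewrite -/(S2 t).
have h1 := S1_eq Ht. rewrite -/(S1 t) in h1.
have h2 := K3_split Ht. have h3 := S2_split Ht.
rewrite h2.
rewrite h3 in A3 *.
set a3 := \sum_(u < m) \sum_(v < m) e t u v * (deg t v - deg t u) ^+ 2.
rewrite -/a3 in A3.
rewrite A0.
set s1 := S1 t in h1 A3 *. set tr := Tr t in A3 *.
have h1s := congr1 (fun x => x * s1) h1.
have h1m := congr1 (fun x => x * (m%:R * (m%:R - 2))) h1.
rewrite /= in h1s h1m.
nia.
Qed.


Definition NC m (t : rel 'I_m) u v := \sum_w e t v w * e t w u.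

Lemma PB_eq m (t : rel 'I_m) :
  \sum_u \sum_v e t u v * (m%:R + (deg t v - deg t u) * 2) * NC t u v = m%:R * K3 t.
Proof.
under eq_bigr do under eq_bigr do rewrite /NC mulr_sumr.
have E : forall u v w, e t u v * (m%:R + (deg t v - deg t u) * 2) * (e t v w * e t w u) =
  m%:R * (e t u v * e t v w * e t w u) + 2 * (e t u v * e t v w * e t w u * deg t v)
  + (-2) * (e t u v * e t v w * e t w u * deg t u).
  by move=> u v w; ring.
under eq_bigr do under eq_bigr do under eq_bigr do rewrite E.
rewrite sum3_lin3 -/(K3 t).
rewrite [X in _ + _ * X]rot3.
have -> : \sum_(u < m) \sum_(v < m) \sum_(w < m) e t v w * e t w u * e t u v * deg t v =
   \sum_(u < m) \sum_(v < m) \sum_(w < m) e t u v * e t v w * e t w u * deg t v.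
  apply: eq_bigr => u _; apply: eq_bigr => v _; apply: eq_bigr => w _; ring.
ring.
Qed.

Definition K4 m (t : rel 'I_m) :=
  \sum_u \sum_v \sum_w \sum_z e t u v * (e t v w * e t w u) * (e t v z * e t z u).
Definition DC m (t : rel 'I_m) :=
  \sum_u \sum_v \sum_w \sum_z ei (z != w) * (e t u v * (e t v w * e t w u) * (e t v z * e t z u)).

Lemma PC_eq m (t : rel 'I_m) :
  \sum_u \sum_v e t u v * NC t u v ^+ 2 = K4 t.
Proof.
apply: eq_bigr => u _; apply: eq_bigr => v _.
rewrite expr2 /NC mulr_suml mulr_sumr; apply: eq_bigr => w _.
by rewrite mulr_sumr mulr_sumr; apply: eq_bigr => z _; rewrite mulrA.
Qed.

Lemma K4_split m (t : rel 'I_m) : K4 t = K3 t + DC t.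
Proof.
rewrite /K4 /K3 /DC -big_split; apply: eq_bigr => u _.
rewrite -big_split; apply: eq_bigr => v _.
rewrite -big_split; apply: eq_bigr => w _.
set F := fun z => e t u v * (e t v w * e t w u) * (e t v z * e t z u).
have H1 : \sum_(z < m) ei (z != w) * F z = \sum_(z < m) F z - F w.
  rewrite -(sum_eq1 F w) -sumrB; apply: eq_bigr => z _.
  by rewrite ei_neq; ring.
rewrite H1 /F.
have -> : e t u v * (e t v w * e t w u) * (e t v w * e t w u) =
   e t u v * (e t v w * e t v w) * (e t w u * e t w u) by ring.
rewrite /e !ei_sq.
rewrite /=; ring.
Qed.

Lemma main_int m (t : rel 'I_m) (Ht : is_tournament t) :
  m%:R * K3 t * 80 <= m%:R * m%:R * (m%:R - 1) * (m%:R - 2) + K3 t * 384 + DC t * 384.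
Proof.
have H0 : 0 <= \sum_u \sum_v e t u v *
   (m%:R + (deg t v - deg t u) * 2 - NC t u v * 8) ^+ 2.
  apply: sumr_ge0 => u _; apply: sumr_ge0 => v _.
  by apply: mulr_ge0; [rewrite /e /ei ler0n | apply: sqr_ge0].
have E : forall u v, e t u v * (m%:R + (deg t v - deg t u) * 2 - NC t u v * 8) ^+ 2 =
  1 * (e t u v * (m%:R + (deg t v - deg t u) * 2) ^+ 2)
  + (-16) * (e t u v * (m%:R + (deg t v - deg t u) * 2) * NC t u v)
  + 64 * (e t u v * NC t u v ^+ 2).
  by move=> u v; ring.
rewrite (eq_bigr _ (fun u _ => eq_bigr _ (fun v _ => E u v))) in H0.
rewrite sum2_lin3 PB_eq PC_eq K4_split -/(PA t) in H0.
have := PA_eq Ht.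
nia.
Qed.


Lemma K3_nat m (t : rel 'I_m) : K3 t = (#|[set x | cyc3 t x]|)%:R.
Proof.
rewrite -sum_b GRing.natr_sum /K3.
rewrite pair_bigA pair_bigA; apply: eq_bigr => [[[u v] w]] _ /=.
by rewrite /cyc3 /e /ei /=; case: (t u v); case: (t v w); case: (t w u);
  rewrite /= ?mulr0 ?mul0r ?mulr1.
Qed.

Lemma DC_nat m (t : rel 'I_m) : DC t = (#|[set x | dc t x]|)%:R.
Proof.
rewrite -sum_b GRing.natr_sum /DC.
rewrite pair_bigA pair_bigA pair_bigA; apply: eq_bigr => [[[[u v] w] z]] _ /=.
by rewrite /dc /e /ei /=; case: (z != w); case: (t u v); case: (t v w); case: (t w u);
  case: (t v z); case: (t z u); rewrite /= ?mulr0 ?mul0r ?mulr1.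
Qed.

Lemma main_nat m (t : rel 'I_m) (Ht : is_tournament t) : (2 <= m)%nat ->
  (m * #|[set x | cyc3 t x]| * 80 <=
   m * m * (m - 1) * (m - 2) + #|[set x | cyc3 t x]| * 384 + #|[set x | dc t x]| * 384)%nat.
Proof.
move=> m2.
have := main_int Ht; rewrite K3_nat DC_nat.
rewrite -(ler_nat int).
by rewrite !natrD !natrM !natrB //; apply: ltnW.
Qed.

End Alg.

Module NF.
Import zify.

Lemma bin3 m : 'C(m, 3) * 6 = m * (m - 1) * (m - 2).
Proof. have := bin_ffact m 3. rewrite !ffactnS ffactn0 /=. move=> ->. rewrite -!subn1 -subnDA. lia. Qed.
Lemma bin4 m : 'C(m, 4) * 24 = m * (m - 1) * (m - 2) * (m - 3).
Proof. have := bin_ffact m 4. rewrite !ffactnS ffactn0 /=. move=> ->. rewrite -!subn1 -!subnDA. lia. Qed.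

Lemma nat_final m (t : rel 'I_m) (Ht : is_tournament t) : 5 <= m ->
  (m * 80 - 384) * (3 * ncopies C3 t) <= m * m * (m - 1) * (m - 2) + 768 * ncopies C4 t.
Proof.
move=> m5.
have h := Alg.main_nat Ht (leq_trans (isT : 2 <= 5) m5).
have f3 := F3 Ht. have f4 := F4 Ht.
nia.
Qed.

Lemma n3_le m (t : rel 'I_m) : ncopies C3 t <= 'C(m, 3).
Proof.
rewrite /ncopies -[m in 'C(m, _)]card_ord -card_draws.
by apply: subset_leq_card; apply/subsetP => S; rewrite !inE => /andP [->].
Qed.

Lemma kform k N3 N4 :
  ((k + 5) * 80 - 384) * (3 * N3) <= (k + 5) * (k + 5) * (k + 5 - 1) * (k + 5 - 2) + 768 * N4 ->
  (k * 80 + 16) * (3 * N3) <= (k + 5) * (k + 5) * (k + 4) * (k + 3) + 768 * N4.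
Proof.
have -> : (k + 5) * 80 - 384 = k * 80 + 16 by lia.
have -> : k + 5 - 1 = k + 4 by lia.
by have -> : k + 5 - 2 = k + 3 by lia.
Qed.

Lemma kbin3 k : 'C(k + 5, 3) * 6 = (k + 5) * (k + 4) * (k + 3).
Proof.
rewrite bin3. have -> : k + 5 - 1 = k + 4 by lia.
by have -> : k + 5 - 2 = k + 3 by lia.
Qed.

Lemma kbin4 k : 'C(k + 5, 4) * 24 = (k + 5) * (k + 4) * (k + 3) * (k + 2).
Proof.
rewrite bin4. have -> : k + 5 - 1 = k + 4 by lia.
have -> : k + 5 - 2 = k + 3 by lia.
by have -> : k + 5 - 3 = k + 2 by lia.
Qed.

End NF.

Ltac natR H :=
  rewrite -?multE -?plusE in H; rewrite ?(plus_INR, mult_INR) in H.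

Lemma per_n m (t : rel 'I_m) (Ht : is_tournament t) : 5 <= m ->
  (40 * pr C3 t <= 32 * pr C4 t + 1 + 192 / INR m)%R.
Proof.
move=> m5.
have [k Hk] : exists k, m = k + 5 by exists (m - 5); rewrite subnK.
have hn := NF.nat_final Ht m5. have n3 := NF.n3_le t.
rewrite /pr.
set N3 := ncopies C3 t in hn n3 *. set N4 := ncopies C4 t in hn *.
have b3 : 'C(m, 3) * 6 = (k + 5) * (k + 4) * (k + 3) by rewrite Hk NF.kbin3.
have b4 : 'C(m, 4) * 24 = (k + 5) * (k + 4) * (k + 3) * (k + 2) by rewrite Hk NF.kbin4.
set B3 := 'C(m, 3) in b3 n3 *. set B4 := 'C(m, 4) in b4 *.
have hk : (k * 80 + 16) * (3 * N3) <= (k + 5) * (k + 5) * (k + 4) * (k + 3) + 768 * N4.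
  by apply: NF.kform; rewrite -Hk.
have Hm : INR m = (INR k + 5)%R.
  rewrite Hk -plusE plus_INR INR_IZR_INZ; simpl; lra.
rewrite Hm.
move/leP: hk => hk; apply le_INR in hk; natR hk.
move/leP: n3 => n3; apply le_INR in n3.
apply (f_equal INR) in b3; natR b3. apply (f_equal INR) in b4; natR b4.
set K := INR k in hk b3 b4 *. set a := INR N3 in hk n3 *. set b := INR N4 in hk *.
set c3 := INR B3 in b3 n3 *. set c4 := INR B4 in b4 *.
rewrite ?INR_IZR_INZ in hk b3 b4. simpl in hk; simpl in b3; simpl in b4.
have K0 : (0 <= K)%R by apply pos_INR.
have b0 : (0 <= b)%R by apply pos_INR.
have P0 : (0 < (K + 5) * (K + 4) * (K + 3))%R.
  by apply Rmult_lt_0_compat; [apply Rmult_lt_0_compat|]; lra.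
have c30 : (0 < c3)%R by lra.
have c40 : (0 < c4)%R.
  have : (0 < (K + 5) * (K + 4) * (K + 3) * (K + 2))%R by apply Rmult_lt_0_compat; lra.
  lra.
set p3 := (a / c3)%R. set p4 := (b / c4)%R.
have ea : a = (p3 * c3)%R by rewrite /p3; field; lra.
have eb : b = (p4 * c4)%R by rewrite /p4; field; lra.
have p3le : (p3 <= 1)%R.
  apply (Rmult_le_reg_r c3); first lra. rewrite -ea; lra.
have p40 : (0 <= p4)%R by rewrite /p4; apply Rle_mult_inv_pos; lra.
have R4' : (c4 * 24 = c3 * 6 * (K + 2))%R by rewrite b4 b3; ring.
have key : ((40 * K + 8) * p3 * (c3 * 6) <= ((K + 5) + 32 * p4 * (K + 2)) * (c3 * 6))%R.
  have L : ((40 * K + 8) * p3 * (c3 * 6) = (K * 80 + 16) * (3 * a))%R by rewrite ea; ring.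
  have Rr : (((K + 5) + 32 * p4 * (K + 2)) * (c3 * 6) =
             (K + 5) * (K + 5) * (K + 4) * (K + 3) + 768 * b)%R.
    rewrite eb.
    have -> : ((K + 5) * (K + 5) * (K + 4) * (K + 3) = (K + 5) * ((K + 5) * (K + 4) * (K + 3)))%R by ring.
    rewrite -b3.
    have -> : (768 * (p4 * c4) = 32 * p4 * (c4 * 24))%R by ring.
    rewrite R4'; ring.
  rewrite L Rr; exact hk.
have key2 : ((40 * K + 8) * p3 <= (K + 5) + 32 * p4 * (K + 2))%R.
  by apply (Rmult_le_reg_r (c3 * 6)); [lra | exact key].
have -> : (192 / (K + 5) = 192 * / (K + 5))%R by [].
apply (Rmult_le_reg_r (K + 5)); first lra.
have -> : ((32 * p4 + 1 + 192 * / (K + 5)) * (K + 5) = 32 * p4 * (K + 5) + (K + 5) + 192)%R.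
  by field; lra.
nra.
Qed.

Unset Implicit Arguments.

Theorem corollary2p6
  (m : nat -> nat) (T : forall n : nat, rel 'I_(m n)) (c3 c4 : R) :
  (forall n, is_tournament (T n)) ->
  (forall M : nat, exists N : nat, forall n : nat, (N <= n)%coq_nat -> (M <= m n)%coq_nat) ->
  Un_cv (fun n => pr C3 (T n)) c3 ->
  Un_cv (fun n => pr C4 (T n)) c4 ->
  (1 / 16 <= c3)%R ->
  (3 / 64 <= c4)%R.
Proof.
move=> Ht Hm H3 H4 c3ge.
suff key : (40 * c3 <= 32 * c4 + 1)%R by lra.
apply Rnot_lt_le => Hlt.
set d := (40 * c3 - (32 * c4 + 1))%R.
have d0 : (0 < d)%R by rewrite /d; lra.
have e0 : (d / 200 > 0)%R by lra.
have [N1 HN1] := H3 _ e0. have [N2 HN2] := H4 _ e0.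
have [M HM] := INR_unbounded (600 / d).
have [N3 HN3] := Hm (Nat.max M 5).
set n := Nat.max N1 (Nat.max N2 N3).
have n1 : (n >= N1)%coq_nat by rewrite /n; lia.
have n2 : (n >= N2)%coq_nat by rewrite /n; lia.
have n3 : (N3 <= n)%coq_nat by rewrite /n; lia.
have hm := HN3 n n3.
have m5 : (5 <= m n)%nat by apply/leP; lia.
have hp := per_n (Ht n) m5.
have h1 := HN1 n n1. have h2 := HN2 n n2.
rewrite /R_dist in h1 h2; cbv beta in h1; cbv beta in h2.
have dd : d = (40 * c3 - (32 * c4 + 1))%R by [].
have [h1a h1b] := Rabs_def2 _ _ h1. have [h2a h2b] := Rabs_def2 _ _ h2.
have hM : (INR M <= INR (m n))%R by apply le_INR; lia.
have X0 : (600 / d < INR (m n))%R by lra.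
have Xp : (0 < INR (m n))%R.
  have : (0 < 600 / d)%R by apply Rdiv_lt_0_compat; lra.
  lra.
have small : (192 / INR (m n) < d / 3)%R.
  apply (Rmult_lt_reg_r (INR (m n))); first lra.
  have -> : (192 / INR (m n) * INR (m n) = 192)%R by field; lra.
  have : (600 / d * d < INR (m n) * d)%R by apply Rmult_lt_compat_r; lra.
  have -> : (600 / d * d = 600)%R by field; lra.
  lra.
lra.
Qed.
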